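(* For every finite set $\Xi\subset\mathbb{F}^2$ of distinct points, the Maximal Cartesian Subset Construction procedure described in the context (for any admissible choices made in step 3) terminates after finitely many iterations, and the set $\Xi'$ it returns is a maximal cartesian subset of $\Xi$, i.e. $\Xi'$ is cartesian and there is no cartesian subset $\Xi''\subseteq\Xi$ with $\Xi'\subsetneq\Xi''$.
   Context: $\mathbb{F}$ is a field. A finite set $\mathcal{A}\subset\mathbb{N}_0^2$ is a lower set if with each $(\alpha_1,\alpha_2)$ it contains all $(\alpha_1',\alpha_2')\in\mathbb{N}_0^2$ with $\alpha_1'\le\alpha_1,\alpha_2'\le\alpha_2$. A finite set of distinct points is cartesian if it equals $\{(x_i,y_j):(i,j)\in\mathcal{A}\}$ for a lower set $\mathcal{A}$, pairwise distinct $x_i$ and pairwise distinct $y_j$. $S_x(\Xi)$: with horizontal lines through points of $\Xi$ (one per distinct ordinate) numbered $l^x_0,\dots,l^x_\nu$ so that $l^x_j$ contains $m_j+1$ points and $m_0\ge\cdots\ge m_\nu$, $S_x(\Xi)=\{(i,j):0\le j\le\nu,0\le i\le m_j\}$; $S_y(\Xi)$ is defined symmetrically with vertical lines. A maximal row subset of $\Xi$ is a non-empty set of the form $\Xi\cap\ell$ for a horizontal line $\ell$. Procedure: start with $\Xi'=\emptyset$ and the working set equal to the input $\Xi$. (1) If the working set $\Xi$ is empty, return $\Xi'$. (2) If $S_x(\Xi)=S_y(\Xi)$, replace $\Xi'$ by $\Xi'\cup\Xi$ and return $\Xi'$. (3) Otherwise choose a maximal row subset $A$ of the current $\Xi$ of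 maximal cardinality; remove from $\Xi$ all points of $A$ and all points whose abscissa differs from every abscissa of the points of $A$; replace $\Xi'$ by $\Xi'\cup A$; go to (1). The returned $\Xi'$ is compared against subsets of the original input set. *)

(* Defs.v *)
From HB Require Import structures.
From mathcomp Require Import all_boot all_order all_algebra.
Set Implicit Arguments. Unset Strict Implicit. Unset Printing Implicit Defensive.

Section MCS.
Variable F : fieldType.
Local Notation pt := (F * F)%type.

(* Finite point sets are represented by duplicate-free sequences; set
   operations are understood via membership. *)

Definition lower_set (A : seq (nat * nat)) : Prop :=
  forall a b : nat * nat, a \in A -> b.1 <= a.1 -> b.2 <= a.2 -> b \in A.

Definition cartesian (S : seq pt) : Prop :=
  exists (A : seq (nat * nat)) (x y : nat -> F),
    [/\ lower_set A,
        (forall a b, a \in A -> b \in A -> x a.1 = x b.1 -> a.1 = b.1),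
        (forall a b, a \in A -> b \in A -> y a.2 = y b.2 -> a.2 = b.2)
      & (forall p : pt, p \in S <-> exists2 a, a \in A & p = (x a.1, y a.2))].

Definition row_count (S : seq pt) (b : F) : nat := count (fun p => p.2 == b) S.
Definition col_count (S : seq pt) (a : F) : nat := count (fun p => p.1 == a) S.

(* sizes m_0+1 >= m_1+1 >= ... of the horizontal lines *)
Definition row_sizes (S : seq pt) : seq nat :=
  sort geq [seq row_count S b | b <- undup [seq p.2 | p <- S]].
Definition col_sizes (S : seq pt) : seq nat :=
  sort geq [seq col_count S a | a <- undup [seq p.1 | p <- S]].

(* S_x(S) = {(i,j) : 0 <= j <= nu, 0 <= i <= m_j} *)
Definition in_Sx (S : seq pt) (ij : nat * nat) : bool :=
  (ij.2 < size (row_sizes S)) && (ij.1 < nth 0 (row_sizes S) ij.2).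
(* S_y(S) = {(i,j) : 0 <= i <= mu, 0 <= j <= n_i} *)
Definition in_Sy (S : seq pt) (ij : nat * nat) : bool :=
  (ij.1 < size (col_sizes S)) && (ij.2 < nth 0 (col_sizes S) ij.1).

Definition Sx_eq_Sy (S : seq pt) : Prop := forall ij, in_Sx S ij = in_Sy S ij.

(* State of the procedure: (Xi', working set Xi). *)
Definition state := (seq pt * seq pt)%type.

Inductive mcs_step : state -> state -> Prop :=
| MCSStep (acc W : seq pt) (b : F) :
    W != [::] -> ~ Sx_eq_Sy W ->
    b \in [seq p.2 | p <- W] ->
    (forall b', row_count W b' <= row_count W b) ->
    let A := [seq p <- W | p.2 == b] in
    mcs_step (acc, W)
      (acc ++ A, [seq p <- W | (p.2 != b) && (p.1 \in [seq q.1 | q <- A])]).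

Inductive mcs_return : state -> seq pt -> Prop :=
| MCSEmpty (acc : seq pt) : mcs_return (acc, [::]) acc
| MCSEq (acc W : seq pt) : W != [::] -> Sx_eq_Sy W -> mcs_return (acc, W) (acc ++ W).

Inductive mcs_output : state -> seq pt -> Prop :=
| MCSOutRet s res : mcs_return s res -> mcs_output s res
| MCSOutStep s s' res : mcs_step s s' -> mcs_output s' res -> mcs_output s res.

Definition maximal_cartesian_subset (Xi Xi' : seq pt) : Prop :=
  [/\ cartesian Xi', {subset Xi' <= Xi} &
      forall Xi'' : seq pt, cartesian Xi'' -> {subset Xi'' <= Xi} ->
        {subset Xi' <= Xi''} -> {subset Xi'' <= Xi'}].

End MCS.

(* Main.v *)
Require Import Defs.
From HB Require Import structures.
From mathcomp Require Import all_boot all_order all_algebra.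
Set Implicit Arguments. Unset Strict Implicit. Unset Printing Implicit Defensive.

Section Aux.
Variable F : fieldType.
Local Notation pt := (F * F)%type.

Definition Pex (S : seq pt) : Prop :=
  forall p q, p \in S -> q \in S -> ((p.1, q.2) \in S) \/ ((q.1, p.2) \in S).

Lemma Pex_eq (S1 S2 : seq pt) : S1 =i S2 -> Pex S1 -> Pex S2.
Proof.
move=> E H p q; rewrite -!E => hp hq; by case: (H p q hp hq) => h; [left|right].
Qed.

Lemma cart_eq (S1 S2 : seq pt) : S1 =i S2 -> cartesian S1 -> cartesian S2.
Proof.
move=> E [A [x [y [H1 H2 H3 H4]]]]; exists A, x, y; split=> // p.
by rewrite -E.
Qed.

Lemma cart_P (S : seq pt) : cartesian S -> Pex S.
Proof.
move=> [A [x [y [Hl _ _ Hm]]]] p q /Hm [a aA ->] /Hm [c cA ->] /=.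
case: (leqP a.1 c.1) => h.
  left; apply/Hm; exists (a.1, c.2) => //; exact: (Hl c).
right; apply/Hm; exists (c.1, a.2) => //; apply: (Hl a) => //=; exact: ltnW.
Qed.

Lemma keyrow (W Z : seq pt) (b : F) r :
  uniq W -> {subset Z <= W} -> Pex Z ->
  (forall p, p \in W -> p.2 == b -> p \in Z) ->
  (forall b', row_count W b' <= row_count W b) -> r \in Z -> (r.1, b) \in W.
Proof.
move=> uW sZW PZ sAZ mx rZ.
case: (boolP ((r.1, b) \in W)) => // nW; exfalso.
set Ab := [seq p <- W | p.2 == b].
have AbZ a : a \in Ab -> a \in Z by rewrite mem_filter => /andP[h1 h2]; apply: sAZ.
set L := r :: [seq (a.1, r.2) | a <- Ab].
have uL : uniq L.
  rewrite /L /= map_inj_in_uniq ?filter_uniq ?andbT //.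
    apply/mapP => [[a aAb]] /(congr1 fst) /= e1.
    move: aAb; rewrite mem_filter => /andP[/eqP a2 aW].
    by move: nW; rewrite e1 -a2 -surjective_pairing aW.
  move=> a c; rewrite !mem_filter => /andP[/eqP a2 _] /andP[/eqP c2 _] [e].
  by rewrite [a]surjective_pairing [c]surjective_pairing e a2 c2.
have sL : {subset L <= [seq p <- W | p.2 == r.2]}.
  move=> z; rewrite /L inE => /orP[/eqP -> | /mapP[a aAb ->]].
    by rewrite mem_filter eqxx sZW.
  rewrite mem_filter eqxx /=.
  case: (PZ a r (AbZ a aAb) rZ) => h; first by apply: sZW.
  move: aAb; rewrite mem_filter => /andP[/eqP a2 _].
  by move: nW; rewrite -a2 (sZW _ h).
have := uniq_leq_size uL sL.
rewrite size_filter /= size_map size_filter => h.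
have := leq_trans h (mx r.2); by rewrite ltnn.
Qed.

Lemma P_addrow (S' T : seq pt) (b : F) :
  Pex S' -> (forall p, p \in T -> p.2 != b -> p \in S') -> {subset S' <= T} ->
  (forall p, p \in T -> (p.1, b) \in T) -> Pex T.
Proof.
move=> PS hT sS hb p q pT qT.
case: (eqVneq q.2 b) => [qb|qb]; first by left; rewrite qb hb.
case: (eqVneq p.2 b) => [pb|pb]; first by right; rewrite pb hb.
by case: (PS p q (hT p pT pb) (hT q qT qb)) => h; [left|right]; apply: sS.
Qed.

Lemma exmax (T : eqType) (s : seq T) (f : T -> nat) :
  s != [::] -> exists2 b, b \in s & forall c, c \in s -> f c <= f b.
Proof.
elim: s => // a s IH _.
case: (eqVneq s [::]) => [->|ne].
  by exists a; rewrite ?inE // => c; rewrite inE => /eqP ->.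
have [b bs hb] := IH ne.
case: (leqP (f a) (f b)) => h.
  exists b; first by rewrite inE bs orbT.
  by move=> c; rewrite inE => /orP[/eqP ->|/hb].
exists a; first by rewrite inE eqxx.
move=> c; rewrite inE => /orP[/eqP ->//|/hb h2]; exact: (leq_trans h2 (ltnW h)).
Qed.

Lemma row_count_gt0 (W : seq pt) c : 0 < row_count W c -> c \in [seq p.2 | p <- W].
Proof.
rewrite /row_count -has_count => /hasP [p pW /eqP <-]; exact: map_f.
Qed.

Lemma col_count_gt0 (W : seq pt) c : 0 < col_count W c -> c \in [seq p.1 | p <- W].
Proof.
rewrite /col_count -has_count => /hasP [p pW /eqP <-]; exact: map_f.
Qed.

Lemma rowmax (W : seq pt) : W != [::] ->
  exists2 b, b \in [seq p.2 | p <- W] & forall b', row_count W b' <= row_count W b.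
Proof.
move=> ne; have ne' : [seq p.2 | p <- W] != [::] by case: W ne.
have [b bW hb] := exmax (row_count W) ne'.
exists b => // b'; case: (boolP (b' \in [seq p.2 | p <- W])) => [/hb //|nb].
case: (posnP (row_count W b')) => [->//|/row_count_gt0 h]; by rewrite h in nb.
Qed.


Lemma colbound (A : seq (nat * nat)) : exists n,
  (forall a, a \in A -> a.1 < n) /\ (forall i, i < n -> exists2 a, a \in A & i <= a.1).
Proof.
elim: A => [|a A [n [h1 h2]]]; first by exists 0; split=> //.
exists (maxn a.1.+1 n); split.
  move=> c; rewrite inE => /orP[/eqP ->|/h1 h]; first by rewrite leq_max ltnSn.
  by rewrite leq_max h orbT.
move=> i; rewrite leq_max; case: (ltnP i a.1.+1) => [h _|_ /orP[//|h]].
  by exists a; rewrite ?inE ?eqxx.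
by have [c cA hc] := h2 i h; exists c; rewrite ?inE ?cA ?orbT.
Qed.

Lemma addrow (S T : seq pt) (b : F) (X : seq F) :
  cartesian S -> (forall p, p \in S -> p.2 != b) -> (forall p, p \in S -> p.1 \in X) ->
  (forall p, p \in T <-> p \in S \/ (p.2 = b /\ p.1 \in X)) -> cartesian T.
Proof.
move=> [A [x [y [Hl Hx Hy Hm]]]] hb hX hT.
have [n [Hn1 Hn2]] := colbound A.
have Hn0 i : i < n -> (i, 0) \in A.
  by move=> /Hn2 [a aA ha]; apply: (Hl a).
set xs := [seq x i | i <- iota 0 n].
set E := [seq e <- undup X | e \notin xs].
have uE : uniq E by rewrite filter_uniq ?undup_uniq.
pose x' i := if i < n then x i else nth (x 0) E (i - n).
pose y' j := if j is j'.+1 then y j' else b.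
pose A' := [seq (i, 0) | i <- iota 0 (n + size E)] ++ [seq (a.1, a.2.+1) | a <- A].
have memA' i j : ((i, j) \in A') = (if j is k.+1 then (i, k) \in A else i < n + size E).
  rewrite mem_cat; case: j => [|k].
    rewrite (mem_map (f := fun i => (i, 0))); last by move=> ? ? [].
    rewrite mem_iota /= add0n.
    case: (boolP (_ \in [seq _ | _ <- A])) => [/mapP[a _ []] //|_]; by rewrite orbF.
  case: (boolP ((i, k.+1) \in [seq (i0, 0) | i0 <- _])) => [/mapP[? _ []] //|_] /=.
  have -> : (i, k.+1) = (fun a : nat * nat => (a.1, a.2.+1)) (i, k) by [].
  rewrite mem_map //; move=> [a1 a2] [c1 c2] /= [-> ->] //.
have Asmall a : a \in A' -> a.1 < n + size E.
  case: a => i [|k]; rewrite memA' //= => /Hn1 /= h; exact: (leq_trans h (leq_addr _ _)).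
have x'inj i k : i < n + size E -> k < n + size E -> x' i = x' k -> i = k.
  rewrite /x'; case: (ltnP i n) => hi; case: (ltnP k n) => hk hi' hk' e.
  - exact: (Hx (i, 0) (k, 0) (Hn0 _ hi) (Hn0 _ hk)).
  - have : nth (x 0) E (k - n) \in E by rewrite mem_nth // ltn_subLR.
    by rewrite mem_filter -e map_f // mem_iota.
  - have : nth (x 0) E (i - n) \in E by rewrite mem_nth // ltn_subLR.
    by rewrite mem_filter e map_f // mem_iota.
  - move/eqP: e; rewrite nth_uniq ?ltn_subLR // => /eqP e.
    by rewrite -(subnK hi) -(subnK hk) e.
exists A', x', y'; split.
- move=> [i j] [i' j'] /=; rewrite !memA'.
  case: j => [|k]; case: j' => [|k'] //=.
    by move=> h hi _; exact: (leq_ltn_trans hi h).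
    by move=> /Hn1 /= h hi _; exact: (leq_trans (leq_ltn_trans hi h) (leq_addr _ _)).
  by move=> h hi hk; apply: (Hl (i, k)).
- move=> a c aA cA; exact: x'inj (Asmall _ aA) (Asmall _ cA).
- move=> [i j] [i' j'] /=; rewrite !memA' /y'.
  have yb k i0 : (i0, k) \in A -> y k != b.
    by move=> h; have := hb (x i0, y k); apply; apply/Hm; exists (i0, k).
  case: j => [|k]; case: j' => [|k'] //.
  + by move=> _ h e; move: (yb _ _ h); rewrite e eqxx.
  + by move=> h _ e; move: (yb _ _ h); rewrite e eqxx.
  + by move=> h1 h2 e; move: (Hy (i, k) (i', k') h1 h2 e) => /= ->.
- move=> p; split=> [/hT|].
  + case=> [/Hm [a aA ->]|[pb pX]].
      exists (a.1, a.2.+1); first by case: a aA => a1 a2; rewrite memA'.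
      by rewrite /= /x' Hn1.
    case: (boolP (p.1 \in xs)) => [/mapP[i]|pn].
      rewrite mem_iota add0n => /= hi e.
      exists (i, 0); first by rewrite memA' (leq_trans hi (leq_addr _ _)).
      by rewrite /= /x' hi -e -pb -surjective_pairing.
    have pE : p.1 \in E by rewrite mem_filter pn mem_undup.
    exists (n + index p.1 E, 0); first by rewrite memA' ltn_add2l index_mem.
    rewrite /= /x' ltnNge leq_addr /= addKn nth_index //.
    by rewrite -pb -surjective_pairing.
  + move=> [[i j]]; rewrite memA' => + ->; case: j => [|k] /= => [hi|h]; apply/hT.
      right; split => //.
      rewrite /x'; case: ifP => h.
        by apply: (hX (x i, y 0)); apply/Hm; exists (i, 0) => //; apply: Hn0.
      have : nth (x 0) E (i - n) \in E by rewrite mem_nth // ltn_subLR // leqNgt h.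
      by rewrite mem_filter mem_undup => /andP[].
    left; rewrite /x' (Hn1 _ h); apply/Hm; by exists (i, k).
Qed.

Lemma P_cart_uniq n (S : seq pt) : size S < n -> uniq S -> Pex S -> cartesian S.
Proof.
elim: n S => // n IH S hs uS PS.
case: (eqVneq S [::]) => [->|ne].
  exists [::], (fun _ => 0%R), (fun _ => 0%R); split=> // p; split=> // [[a]]; rewrite in_nil //.
have [b bS hb] := rowmax ne.
have full r : r \in S -> (r.1, b) \in S.
  by move=> rS; exact: (keyrow uS (fun p (h : p \in S) => h) PS (fun p pS _ => pS) hb rS).
set S' := [seq p <- S | p.2 != b].
have cS' : cartesian S'.
  apply: IH.
  - have : size S' < size S.
      rewrite size_filter -(count_predC (fun p : pt => p.2 != b)) -addn1 leq_add2l.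
      rewrite -has_count; move: bS => /mapP[p pS ->].
      by apply/hasP; exists p; rewrite //= eqxx.
    by move=> h; exact: (leq_trans h hs).
  - by rewrite filter_uniq.
  - move=> p q; rewrite !mem_filter => /andP[pb pS] /andP[qb qS].
    by case: (PS p q pS qS) => h; [left|right]; rewrite /= h ?qb ?pb.
apply: (addrow (b := b) (X := [seq p.1 | p <- S & p.2 == b]) cS').
- by move=> p; rewrite mem_filter => /andP[].
- move=> p; rewrite mem_filter => /andP[_ /full h]; apply/mapP; exists (p.1, b) => //.
  by rewrite mem_filter eqxx.
- move=> p; split.
    case: (eqVneq p.2 b) => [pb pS|pb pS]; last by left; rewrite mem_filter pb.
    by right; split=> //; apply/mapP; exists p => //; rewrite mem_filter pb eqxx.
  case=> [|[pb /mapP[q]]]; first by rewrite mem_filter => /andP[].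
  rewrite mem_filter => /andP[/eqP qb qS] e.
  by rewrite [p]surjective_pairing e pb -qb -surjective_pairing.
Qed.

Lemma P_cart (S : seq pt) : Pex S -> cartesian S.
Proof.
move=> PS; apply: (cart_eq (S1 := undup S)); first by move=> p; rewrite mem_undup.
apply: (P_cart_uniq (n := (size (undup S)).+1)) => //; first exact: undup_uniq.
by apply: (Pex_eq (S1 := S)) => // p; rewrite mem_undup.
Qed.

Definition Rc (S : seq pt) i := count (fun c => i < row_count S c) (undup [seq p.2 | p <- S]).
Definition Cc (S : seq pt) j := count (fun a => j < col_count S a) (undup [seq p.1 | p <- S]).
Definition Qp (S : seq pt) := forall i j, (j < Rc S i) = (i < Cc S j).

Lemma sorted_count (s : seq nat) i j : sorted geq s ->
  (j < size s) && (i < nth 0 s j) = (j < count (fun c => i < c) s).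
Proof.
elim: s j => // c s IH j /= hs.
have hall : all (fun d => d <= c) s.
  have := hs; rewrite (path_sortedE (fun y x z h1 h2 => leq_trans h2 h1)).
  by case/andP.
have hs' : sorted geq s by move: hs; apply: path_sorted.
case: (ltnP i c) => hic.
  case: j => [|j] /=; first by rewrite hic.
  by rewrite add1n IH.
have c0 : count (fun c0 => i < c0) s = 0.
  apply/eqP; rewrite -leqn0 leqNgt -has_count; apply/hasP => [[d ds hd]].
  by move/allP: hall => /(_ d ds) h; have := leq_trans (leq_trans hd h) hic; rewrite ltnn.
rewrite c0 add0n; case: j => [|j] /=; first by rewrite ltnNge hic.
rewrite andbC ltnS; case: (ltnP j (size s)) => hj /=; last by rewrite andbF.
rewrite andbT; apply/negbTE; rewrite -leqNgt.
by move/allP: hall => /(_ _ (mem_nth 0 hj)) h; exact: leq_trans h hic.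
Qed.

Lemma in_Sx_Rc (S : seq pt) i j : in_Sx S (i, j) = (j < Rc S i).
Proof.
rewrite /in_Sx /= sorted_count; last by apply: sort_sorted => x y; exact: leq_total.
rewrite /Rc (permP (permEl (perm_sort _ _))) count_map //.
Qed.

Lemma in_Sy_Cc (S : seq pt) i j : in_Sy S (i, j) = (i < Cc S j).
Proof.
rewrite /in_Sy /= sorted_count; last by apply: sort_sorted => x y; exact: leq_total.
rewrite /Cc (permP (permEl (perm_sort _ _))) count_map //.
Qed.

Lemma Sx_Q (S : seq pt) : Sx_eq_Sy S -> Qp S.
Proof. by move=> h i j; rewrite -in_Sx_Rc -in_Sy_Cc h. Qed.

Lemma countU (T : eqType) (P : pred T) (L1 L2 : seq T) : uniq L1 -> uniq L2 ->
  (forall a, P a -> (a \in L1) = (a \in L2)) -> count P L1 = count P L2.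
Proof.
move=> u1 u2 h; rewrite -!size_filter; apply: perm_size; apply: uniq_perm;
  rewrite ?filter_uniq // => a; rewrite !mem_filter.
by case: (boolP (P a)) => //= /h.
Qed.

Lemma count_split (T : eqType) (P : pred T) (L : seq T) b : uniq L -> b \in L ->
  count P L = P b + count (fun c => (c != b) && P c) L.
Proof.
elim: L => // c L IH /= /andP[cL uL]; rewrite inE => /orP[/eqP e|bL].
  rewrite e eqxx /= add0n; congr (_ + _); apply: eq_in_count => d dL /=.
  have -> // : d != c by apply: contraNneq cL => ed; rewrite -ed.
rewrite (IH uL bL) addnCA; congr (_ + _); case: (eqVneq c b) => // e.
by move: cL; rewrite e bL.
Qed.

Lemma count_and2 (T : Type) (a q : pred T) (s : seq T) :
  count a s = count (fun x => a x && q x) s + count (fun x => a x && ~~ q x) s.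
Proof.
elim: s => //= x s ->; case: (a x); case: (q x); rewrite /= ?add0n ?add1n ?addSn ?addnS //.
Qed.

Lemma Qstep (W : seq pt) : uniq W -> Qp W -> W != [::] ->
  exists b, [/\ b \in [seq p.2 | p <- W], (forall b', row_count W b' <= row_count W b),
    (forall r, r \in W -> (r.1, b) \in W) & Qp [seq p <- W | p.2 != b]].
Proof.
move=> uW QW ne.
have [b bS hb] := rowmax ne.
set m := row_count W b.
have Rbig i : m <= i -> Rc W i = 0.
  move=> hi; apply/eqP; rewrite -leqn0 leqNgt -has_count; apply/hasP => [[c _ h]].
  by have := leq_trans (leq_trans h (hb c)) hi; rewrite ltnn.
have C0 : Cc W 0 = size (undup [seq p.1 | p <- W]).
  rewrite /Cc -[RHS]count_predT; apply: eq_in_count => a; rewrite mem_undup => /mapP[p pW ->].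
  by rewrite /col_count -has_count; apply/hasP; exists p.
have habs : size (undup [seq p.1 | p <- W]) <= m.
  have := QW m 0; rewrite Rbig // ltnn C0 => /esym/negbT; by rewrite -leqNgt.
set RA := [seq p.1 | p <- W & p.2 == b].
have uRA : uniq RA.
  rewrite map_inj_in_uniq ?filter_uniq //.
  move=> a c; rewrite !mem_filter => /andP[/eqP a2 _] /andP[/eqP c2 _] e.
  by rewrite [a]surjective_pairing [c]surjective_pairing e a2 c2.
have sRA : size RA = m by rewrite size_map size_filter.
have RAsub : {subset RA <= undup [seq p.1 | p <- W]}.
  move=> a /mapP[p]; rewrite mem_filter => /andP[_ pW] ->; by rewrite mem_undup map_f.
have habs' : size (undup [seq p.1 | p <- W]) <= size RA by rewrite sRA.
have [_ eqRA] := uniq_min_size uRA RAsub habs'.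
have full r : r \in W -> (r.1, b) \in W.
  move=> rW; have : r.1 \in RA by rewrite eqRA mem_undup map_f.
  move=> /mapP[p]; rewrite mem_filter => /andP[/eqP pb pW] ->.
  by rewrite -pb -surjective_pairing.
exists b; split => //.
set W' := [seq p <- W | p.2 != b].
have uW' : uniq W' by rewrite filter_uniq.
have rcW' c : row_count W' c = if c == b then 0 else row_count W c.
  rewrite /row_count count_filter; case: (eqVneq c b) => [->|cb].
    by apply/eqP; rewrite -leqn0 leqNgt -has_count; apply/hasP => [[p _ /= /andP[/eqP -> ]]]; rewrite eqxx.
  apply: eq_count => p /=; case: (eqVneq p.2 c) => // ->; by rewrite cb.
have RcW' i : Rc W' i = Rc W i - 1.
  have e1 : Rc W' i = count (fun c => (c != b) && (i < row_count W c)) (undup [seq p.2 | p <- W]).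
    rewrite /Rc (countU (L2 := undup [seq p.2 | p <- W])) ?undup_uniq //.
      by apply: eq_count => c; rewrite rcW'; case: (eqVneq c b).
    move=> c h; have h' : 0 < row_count W' c by exact: leq_ltn_trans h.
    rewrite !mem_undup (row_count_gt0 h'); apply/esym.
    apply: row_count_gt0; move: h'; rewrite rcW'; by case: (c == b).
  rewrite e1 /Rc [X in _ = X - 1](count_split _ (b := b)) ?undup_uniq ?mem_undup //=.
  case: (ltnP i m) => hi; first by rewrite add1n subn1.
  rewrite add0n; have := Rbig i hi; rewrite /Rc (count_split _ (b := b)) ?undup_uniq ?mem_undup //=.
  by rewrite ltnNge hi add0n => ->.
have ccW a : a \in [seq p.1 | p <- W] -> col_count W a = (col_count W' a).+1.
  move=> aW; rewrite /col_count count_filter (count_and2 _ (fun p : pt => p.2 == b)).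
  rewrite -add1n; congr (_ + _).
  have : (a, b) \in W by move: aW => /mapP[p pW ->]; exact: full.
  move=> abW; have := count_uniq_mem (a, b) uW; rewrite abW /= => e; rewrite -[RHS]e; apply: eq_count => p /=.
  by rewrite [p in RHS]surjective_pairing xpair_eqE.
have CcW' j : Cc W' j = Cc W j.+1.
  rewrite /Cc (countU (L2 := undup [seq p.1 | p <- W])) ?undup_uniq //.
    apply: eq_in_count => a; rewrite mem_undup => /ccW ->; by [].
  move=> a h; have h' : 0 < col_count W' a by exact: leq_ltn_trans h.
  have aW' := col_count_gt0 h'; rewrite !mem_undup aW'; apply/esym.
  move: aW' => /mapP[p]; rewrite mem_filter => /andP[_ pW] ->; exact: map_f.
move=> i j; by rewrite RcW' CcW' ltn_subRL add1n QW.
Qed.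

Lemma Q_P n (W : seq pt) : size W < n -> uniq W -> Qp W -> Pex W.
Proof.
elim: n W => // n IH W hs uW QW.
case: (eqVneq W [::]) => [-> p q //|ne].
have [b [bS hb full QW']] := Qstep uW QW ne.
apply: (P_addrow (S' := [seq p <- W | p.2 != b]) (b := b)) => //.
- apply: IH; last by [] ; last by rewrite filter_uniq.
  have : size [seq p <- W | p.2 != b] < size W.
    rewrite size_filter -(count_predC (fun p : pt => p.2 != b)) -addn1 leq_add2l.
    rewrite -has_count; move: bS => /mapP[p pS ->].
    by apply/hasP; exists p; rewrite //= eqxx.
  by move=> h; exact: (leq_trans h hs).
- by move=> p pW pb; rewrite mem_filter pb.
- by move=> p; rewrite mem_filter => /andP[].
Qed.

End Aux.

From Stdlib Require Import Classical.

Definition Maxl (F : fieldType) (W r0 : seq (F * F)) :=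
  [/\ Pex r0, {subset r0 <= W} &
      forall Z, Pex Z -> {subset Z <= W} -> {subset r0 <= Z} -> {subset Z <= r0}].

Lemma count_lt (T : eqType) (a : pred T) (s : seq T) x : x \in s -> ~~ a x -> count a s < size s.
Proof.
move=> xs ax; rewrite -(count_predC a) -addn1 leq_add2l -has_count.
by apply/hasP; exists x.
Qed.

Lemma step_size (F : fieldType) (s s' : state F) : mcs_step s s' -> size s'.2 < size s.2.
Proof.
case=> acc W b ne nS bW hb A.
rewrite [X in X < _]size_filter; move: bW => /mapP[p pS pb].
apply: (count_lt (x := p)); first exact: pS.
by rewrite pb eqxx.
Qed.


Lemma acc_lemma (F : fieldType) n (s : state F) :
  size s.2 < n -> Acc (fun s' s => mcs_step s s') s.
Proof.
elim: n s => [s|n IH s hs]; first by rewrite ltn0.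
have hs' : size s.2 <= n by [].
constructor => s' st.
apply: IH; exact: leq_trans (step_size st) hs'.
Qed.

Lemma exist_out (F : fieldType) n (W acc : seq (F * F)) :
  size W < n -> exists res, mcs_output (acc, W) res.
Proof.
elim: n W acc => [W acc|n IH W acc hs]; first by rewrite ltn0.
have hs' : size W <= n by [].
case: (eqVneq W [::]) => [->|ne]; first by exists acc; apply: MCSOutRet; exact: MCSEmpty.
case: (classic (Sx_eq_Sy W)) => hS.
  by exists (acc ++ W); apply: MCSOutRet; exact: MCSEq.
have [b bW hb] := rowmax ne.
have st := MCSStep acc ne hS bW hb.
have [res hres] := IH [seq p <- W | (p.2 != b) && (p.1 \in [seq q.1 | q <- [seq p <- W | p.2 == b]])] (acc ++ [seq p <- W | p.2 == b])
  (leq_trans (step_size st) hs').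
by exists res; apply: MCSOutStep st hres.
Qed.

Lemma correct (F : fieldType) (s : state F) res : mcs_output s res -> uniq s.2 ->
  exists r0, res = s.1 ++ r0 /\ Maxl s.2 r0.
Proof.
elim=> {s res} [s res [acc|acc W ne hS] |s s' res st _ IH] u.
- exists [::]; split; first by rewrite cats0.
  by split=> // [p q|Z _ sZ _ p /sZ]; rewrite in_nil.
- exists W; split => //; split => //.
  exact: (Q_P (n := (size W).+1)) u (Sx_Q hS).
case: st IH u => acc W b ne nS bW hb A /= IH uW.
have uW' : uniq [seq p <- W | (p.2 != b) && (p.1 \in [seq q.1 | q <- A])] by rewrite filter_uniq.
have [r0' [-> [P' sub' max']]] := IH uW'.
exists (A ++ r0'); split; first by rewrite catA.
set W' := [seq p <- W | _] in uW' sub' max'.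
have memW' p : (p \in W') = [&& p.2 != b, p.1 \in [seq q.1 | q <- A] & p \in W].
  by rewrite /W' mem_filter andbA.
have memA p : (p \in A) = (p.2 == b) && (p \in W) by rewrite /A mem_filter.
have inA a : a \in [seq q.1 | q <- A] -> (a, b) \in A.
  move=> /mapP[q]; rewrite memA => /andP[/eqP qb qW] ->.
  by rewrite -qb -surjective_pairing memA qb eqxx.
split.
- apply: (P_addrow (S' := r0') (b := b)) => //.
  + move=> p; rewrite mem_cat memA => /orP[/andP[/eqP -> _]|//]; by rewrite eqxx.
  + by move=> p h; rewrite mem_cat h orbT.
  + move=> p; rewrite mem_cat => /orP[|/sub'].
      rewrite memA => /andP[/eqP pb pW]; by rewrite mem_cat memA -pb -surjective_pairing eqxx pW.
    by rewrite memW' => /and3P[_ /inA h _]; rewrite mem_cat h.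
- move=> p; rewrite mem_cat => /orP[|/sub']; first by rewrite memA => /andP[].
  by rewrite memW' => /and3P[].
move=> Z PZ sZ sub r rZ.
case: (eqVneq r.2 b) => rb.
  by rewrite mem_cat memA rb eqxx (sZ _ rZ).
have AZ p : p \in W -> p.2 == b -> p \in Z.
  by move=> pW pb; apply: sub; rewrite mem_cat memA pb pW.
have := keyrow uW sZ PZ AZ hb rZ => rbW.
have r1 : r.1 \in [seq q.1 | q <- A].
  by apply/mapP; exists (r.1, b); rewrite // memA eqxx rbW.
have rW' : r \in W' by rewrite memW' rb r1 (sZ _ rZ).
set Z' := [seq p <- Z | p \in W'].
have : {subset Z' <= r0'}.
  apply: max'.
  - move=> p q; rewrite /Z' mem_filter => /andP[pW' pZ]; rewrite mem_filter => /andP[qW' qZ].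
    move: (pW') (qW'); rewrite !memW' => /and3P[pb p1 pW] /and3P[qb q1 qW].
    case: (PZ p q pZ qZ) => h; [left|right]; rewrite mem_filter h andbT memW' /= ?pb ?qb ?p1 ?q1 (sZ _ h) //.
  - by move=> p; rewrite mem_filter => /andP[].
  - by move=> p h; rewrite mem_filter (sub' _ h) sub // mem_cat h orbT.
by move=> /(_ r); rewrite mem_filter rW' rZ mem_cat => -> //; rewrite orbT.
Qed.

Theorem mainTheorem7 (F : fieldType) (Xi : seq (F * F)) (Xi_uniq : uniq Xi) :
  [/\ Acc (fun s' s => mcs_step s s') ([::], Xi),
      (exists res, mcs_output ([::], Xi) res)
    & forall res, mcs_output ([::], Xi) res -> maximal_cartesian_subset Xi res].
Proof.
split.
- exact: (acc_lemma (n := (size Xi).+1)).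
- exact: (exist_out (n := (size Xi).+1)).
move=> res /correct /(_ Xi_uniq) [r0 [/= -> [P0 s0 m0]]].
split=> //; first exact: P_cart.
by move=> Z cZ sZ s0Z; apply: m0 => //; exact: cart_P.
Qed.
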